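(* Let $F$ be the elementary cellular automaton with rule number 104. For every nonempty finite word $u\in\{0,1\}^*$, the deterministic communication complexity of $\textsc{SInv}_{F,u}$ restricted to inputs of length $n$ is bounded by a constant independent of $n$.
   Context: An elementary cellular automaton (ECA) with rule number $N\in\{0,\dots,255\}$ is the map $F:\{0,1\}^{\mathbb Z}\to\{0,1\}^{\mathbb Z}$ given by $F(x)_i=f(x_{i-1},x_i,x_{i+1})$. Here the local rule $f:\{0,1\}^3\to\{0,1\}$ is determined by $N=\sum_{a,b,c\in\{0,1\}}2^{4a+2b+c}f(a,b,c)$. For a nonempty finite word $u$, $p_u\in\{0,1\}^{\mathbb Z}$ is defined by $(p_u)_i=u_{i\bmod |u|}$. For a finite word $x$, $p_u[x]$ is the configuration equal to $x$ on positions $0,\dots,|x|-1$ and to $p_u$ elsewhere. $\textsc{SInv}_{F,u}$ is the decision problem: on input a finite word $x$, decide whether there is an integer $w$ such that for all $t\ge0$ the set of positions where $F^t(p_u)$ and $F^t(p_u[x])$ differ is contained in an interval of length $w$. For each $n$, it is regarded as a function $\{0,1\}^n\to\{0,1\}$. For a function $g:X\times Y\to Z$, $D(g)$ is the minimal depth of a deterministic two-party protocol computing $g$. In such a protocol, Alice knows $x$ and Bob knows $y$. The protocol is a binary tree: each internal node is labelled by a function of Alice's input only or of Bob's input only, with values in $\{\text{left},\text{right}\}$, and each leaf is labelled by an output value. For $g:\{0,1\}^m\to Z$, set $D(g)=\max_{0\le i<m}D(g_i)$, where $g_i:\{0,1\}^i\times\{0,1\}^{m-i}\to Z$ is $g_i(x,y)=g(xy)$.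 *)

(* Defs.v *)
From mathcomp Require Import all_boot.
From Stdlib Require Import ZArith.

Set Implicit Arguments.
Unset Strict Implicit.
Unset Printing Implicit Defensive.

Definition config := Z -> bool.

Definition local_rule (N : nat) (a b c : bool) : bool :=
  Nat.testbit N (4 * nat_of_bool a + 2 * nat_of_bool b + nat_of_bool c).

Definition eca (N : nat) (x : config) : config :=
  fun i => local_rule N (x (i - 1)%Z) (x i) (x (i + 1)%Z).

Definition eca_iter (N : nat) (t : nat) (x : config) : config :=
  Nat.iter t (eca N) x.

Definition periodic (u : seq bool) : config :=
  fun i => nth false u (Z.to_nat (i mod Z.of_nat (size u))%Z).

Definition patch (u x : seq bool) : config :=
  fun i => if ((0 <=? i)%Z && (i <? Z.of_nat (size x))%Z)
           then nth false x (Z.to_nat i) else periodic u i.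

Definition SInv (N : nat) (u x : seq bool) : Prop :=
  exists w : Z, forall t : nat, exists a : Z, forall i : Z,
    eca_iter N t (periodic u) i <> eca_iter N t (patch u x) i ->
    (a <= i < a + w)%Z.

Inductive protocol (X Y : Type) : Type :=
  | PLeaf : bool -> protocol X Y
  | PAlice : (X -> bool) -> protocol X Y -> protocol X Y -> protocol X Y
  | PBob : (Y -> bool) -> protocol X Y -> protocol X Y -> protocol X Y.

Fixpoint prot_eval (X Y : Type) (p : protocol X Y) (x : X) (y : Y) : bool :=
  match p with
  | PLeaf b => b
  | PAlice f l r => if f x then prot_eval l x y else prot_eval r x y
  | PBob f l r => if f y then prot_eval l x y else prot_eval r x y
  end.

Fixpoint prot_depth (X Y : Type) (p : protocol X Y) : nat :=
  match p with
  | PLeaf _ => 0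
  | PAlice _ l r => (maxn (prot_depth l) (prot_depth r)).+1
  | PBob _ l r => (maxn (prot_depth l) (prot_depth r)).+1
  end.

(* D(SInv_{F,u} restricted to {0,1}^n) <= c :
   for every split point 0 <= i < n, some protocol of depth <= c, with Alice
   holding the first i bits and Bob the remaining n - i bits, computes
   (x, y) |-> SInv(xy). *)
Definition SInv_cc_le (N : nat) (u : seq bool) (n c : nat) : Prop :=
  forall i : nat, i < n ->
    exists p : protocol (i.-tuple bool) ((n - i).-tuple bool),
      prot_depth p <= c /\
      forall (x : i.-tuple bool) (y : (n - i).-tuple bool),
        prot_eval p x y = true <-> SInv N u (tval x ++ tval y).

(* Main.v *)
Require Import Defs.
From Stdlib Require Import ZArith Lia.
From mathcomp Require Import all_boot zify.
From Stdlib Require Import Classical.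

Definition rr (a b c : bool) : bool :=
  match a, b, c with
  | true, true, false | true, false, true | false, true, true => true
  | _, _, _ => false end.

Lemma lr104 a b c : local_rule 104 a b c = rr a b c.
Proof. by case: a; case: b; case: c. Qed.

Lemma eca_val y i : eca 104 y i = rr (y (i-1)%Z) (y i) (y (i+1)%Z).
Proof. by rewrite /eca lr104. Qed.

Lemma iterS t y : eca_iter 104 t.+1 y = eca 104 (eca_iter 104 t y).
Proof. by []. Qed.

Lemma iter_add a b y : eca_iter 104 (a + b) y = eca_iter 104 a (eca_iter 104 b y).
Proof. elim: a => [//|a IH]. by rewrite addSn !iterS IH. Qed.

Fixpoint stepw (w : seq bool) : seq bool :=
  match w with
  | a :: ((b :: c :: _) as t) => rr a b c :: stepw t
  | _ => [::] end.

Fixpoint win (y : config) (s : Z) (L : nat) : seq bool :=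
  match L with 0 => [::] | S L' => y s :: win y (s+1)%Z L' end.

Lemma stepw_win y s L : stepw (win y s L.+2) = win (eca 104 y) (s+1)%Z L.
Proof.
elim: L s => [//|L IH] s.
change (win y s L.+3) with (y s :: win y (s+1)%Z L.+2).
change (stepw (y s :: win y (s + 1)%Z L.+2)) with
   (rr (y s) (y (s+1)%Z) (y (s+1+1)%Z) :: stepw (win y (s + 1)%Z L.+2)).
rewrite IH /= eca_val.
by have -> : (s + 1 - 1 = s)%Z by lia.
Qed.

Lemma iterSw (n : nat) (f : seq bool -> seq bool) x : Nat.iter n.+1 f x = f (Nat.iter n f x).
Proof. by []. Qed.

Lemma iter_win j y s L : Nat.iter j stepw (win y s (L + 2 * j)) = win (eca_iter 104 j y) (s + Z.of_nat j)%Z L.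
Proof.
elim: j L s => [|j IH] L s.
  have -> : L + 2 * 0 = L by lia.
  by rewrite /= Z.add_0_r.
have -> : L + 2 * j.+1 = (L.+2) + 2 * j by lia.
rewrite iterSw IH stepw_win iterS.
by have -> : (s + Z.of_nat j + 1 = s + Z.of_nat j.+1)%Z by lia.
Qed.


Lemma nth_win y s L k : (k < L)%N -> nth false (win y s L) k = y (s + Z.of_nat k)%Z.
Proof.
revert s k; induction L as [|L IH]; intros s k Hk; first by [].
destruct k as [|k]; simpl.
  by rewrite Z.add_0_r.
rewrite IH //. by have -> : (s + 1 + Z.of_nat k = s + Z.of_nat k.+1)%Z by lia.
Qed.

Lemma win_add y s a b : win y s (a + b) = win y s a ++ win y (s + Z.of_nat a)%Z b.
Proof.
elim: a s => [|a IH] s /=. by rewrite Z.add_0_r.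
rewrite IH. by have -> : (s + 1 + Z.of_nat a = s + Z.of_nat a.+1)%Z by lia.
Qed.

Lemma win_ext y z s L : (forall k, (k < L)%N -> y (s + Z.of_nat k)%Z = z (s + Z.of_nat k)%Z) ->
  win y s L = win z s L.
Proof.
elim: L s => [//|L IH] s H /=.
have := H 0%N isT; rewrite Z.add_0_r => ->.
rewrite IH // => k Hk.
have := H k.+1 Hk. by have -> : (s + Z.of_nat k.+1 = s + 1 + Z.of_nat k)%Z by lia.
Qed.

Fixpoint no00 (w : seq bool) : bool :=
  match w with a :: ((b :: _) as t) => (a || b) && no00 t | _ => true end.

Lemma no00_win y s L : (forall p, y p || y (p+1)%Z) -> no00 (win y s L).
Proof.
elim: L s => [//|L IH] s H.
case: L IH => [//|L] IH.
change (no00 (y s :: win y (s+1)%Z L.+1)) with ((y s || y (s+1)%Z) && no00 (win y (s+1)%Z L.+1)).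
apply/andP; split; [exact: H | exact: IH].
Qed.

Fixpoint allseqs (n : nat) : seq (seq bool) :=
  match n with 0 => [:: [::]] | S n => map (cons true) (allseqs n) ++ map (cons false) (allseqs n) end.

Lemma mem_allseqs w : w \in allseqs (size w).
Proof.
elim: w => [//|b w IH] /=.
have inj : forall b0 : bool, injective (cons b0) by move=> b0 ? ? [].
rewrite mem_cat; apply/orP; case: b; [left|right]; by rewrite mem_map.
Qed.

Definition Nloc (w : seq bool) : bool :=
  [&& no00 w, no00 (Nat.iter 1 stepw w), no00 (Nat.iter 2 stepw w) & no00 (Nat.iter 3 stepw w)].

Definition det_ok : bool :=
  all (fun w1 => all (fun pre => let w2 := pre ++ drop 3 w1 in
     (Nloc w1 && Nloc w2) ==> (nth false w1 2 == nth false w2 2)) (allseqs 3)) (allseqs 9).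

Lemma det_ok_true : det_ok. Proof. vm_compute. reflexivity. Qed.

Definition has00in (v : seq bool) (m : nat) :=
  has (fun k => ~~ nth false v k && ~~ nth false v k.+1) (iota 0 m).

Definition growR_ok : bool := all (fun w => (~~ nth false w 2 && ~~ nth false w 3) ==>
   has00in (Nat.iter 3 stepw w) 5) (allseqs 12).
Definition growL_ok : bool := all (fun w => (~~ nth false w 8 && ~~ nth false w 9) ==>
   has00in (Nat.iter 3 stepw w) 5) (allseqs 12).
Lemma growR_true : growR_ok. Proof. vm_compute. reflexivity. Qed.
Lemma growL_true : growL_ok. Proof. vm_compute. reflexivity. Qed.

Lemma size_win y s L : size (win y s L) = L.
Proof. by elim: L s => [//|L IH] s /=; rewrite IH. Qed.

Definition N3 (y : config) := forall j p, (j <= 3)%N -> eca_iter 104 j y p || eca_iter 104 j y (p+1)%Z.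

Lemma Nloc_win y s : N3 y -> Nloc (win y s 9).
Proof.
move=> H.
have h1 := iter_win 1 y s 7. have h2 := iter_win 2 y s 5. have h3 := iter_win 3 y s 3.
rewrite /Nloc h1 h2 h3.
apply/and4P; split; apply: no00_win => p;
  [exact: (H 0%N p isT) | exact: (H 1%N p isT) | exact: (H 2%N p isT) | exact: (H 3%N p isT)].
Qed.

Lemma det y z i : N3 y -> N3 z ->
  (forall k, (1 <= k <= 6)%N -> y (i + Z.of_nat k)%Z = z (i + Z.of_nat k)%Z) -> y i = z i.
Proof.
move=> Hy Hz Hyz.
have D := det_ok_true.
move: D => /allP /(_ (win y (i-2)%Z 9)).
rewrite -{1}(size_win y (i-2)%Z 9) mem_allseqs => /(_ isT) /allP /(_ (win z (i-2)%Z 3)).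
rewrite -{1}(size_win z (i-2)%Z 3) mem_allseqs => /(_ isT).
have E : win z (i - 2)%Z 3 ++ drop 3 (win y (i - 2)%Z 9) = win z (i-2)%Z 9.
  rewrite (win_add y _ 3 6) (win_add z _ 3 6).
  rewrite -{1}(size_win y (i-2)%Z 3) drop_size_cat //.
  congr (_ ++ _); apply: win_ext => k Hk.
  have -> : (i - 2 + Z.of_nat 3 + Z.of_nat k = i + Z.of_nat (k.+1))%Z by lia.
  apply: Hyz; lia.
cbv zeta.
rewrite E !Nloc_win // andbT implyTb => /eqP.
rewrite !nth_win //.
by have -> : (i - 2 + Z.of_nat 2 = i)%Z by lia.
Qed.

Lemma iter_win12 y s : Nat.iter 3 stepw (win y s 12) = win (eca_iter 104 3 y) (s + Z.of_nat 3)%Z 6.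
Proof. exact: (iter_win 3 y s 6). Qed.

Lemma growR y R : y R = false -> y (R+1)%Z = false ->
  exists q, (R+1 <= q)%Z /\ eca_iter 104 3 y q = false /\ eca_iter 104 3 y (q+1)%Z = false.
Proof.
move=> h0 h1.
have G := growR_true.
move: G => /allP /(_ (win y (R-2)%Z 12)).
rewrite -{1}(size_win y (R-2)%Z 12) mem_allseqs => /(_ isT).
rewrite !nth_win //.
have -> : (R - 2 + Z.of_nat 2 = R)%Z by lia.
have -> : (R - 2 + Z.of_nat 3 = R + 1)%Z by lia.
rewrite h0 h1 andbT implyTb iter_win12 => /hasP [k].
rewrite mem_iota => /andP [_ Hk] /andP [].
rewrite !nth_win; try lia.
move=> /negbTE a /negbTE b.
exists (R - 2 + Z.of_nat 3 + Z.of_nat k)%Z; split; first lia.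
split; first by [].
by have -> : (R - 2 + Z.of_nat 3 + Z.of_nat k + 1 = R - 2 + Z.of_nat 3 + Z.of_nat k.+1)%Z by lia.
Qed.

Lemma growL y R : y R = false -> y (R+1)%Z = false ->
  exists q, (q <= R-1)%Z /\ eca_iter 104 3 y q = false /\ eca_iter 104 3 y (q+1)%Z = false.
Proof.
move=> h0 h1.
have G := growL_true.
move: G => /allP /(_ (win y (R-8)%Z 12)).
rewrite -{1}(size_win y (R-8)%Z 12) mem_allseqs => /(_ isT).
rewrite !nth_win //.
have -> : (R - 8 + Z.of_nat 8 = R)%Z by lia.
have -> : (R - 8 + Z.of_nat 9 = R + 1)%Z by lia.
rewrite h0 h1 andbT implyTb iter_win12 => /hasP [k].
rewrite mem_iota => /andP [_ Hk] /andP [].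
rewrite !nth_win; try lia.
move=> /negbTE a /negbTE b.
exists (R - 8 + Z.of_nat 3 + Z.of_nat k)%Z; split; first lia.
split; first by [].
by have -> : (R - 8 + Z.of_nat 3 + Z.of_nat k + 1 = R - 8 + Z.of_nat 3 + Z.of_nat k.+1)%Z by lia.
Qed.

Lemma rr_ff1 a : rr a false false = false.
Proof. by case: a. Qed.
Lemma rr_ff2 c : rr false false c = false.
Proof. by case: c. Qed.

Lemma step_agree y y' a b : (forall i, (i < a \/ b <= i)%Z -> y i = y' i) ->
  forall i, (i < a - 1 \/ b + 1 <= i)%Z -> eca 104 y i = eca 104 y' i.
Proof.
move=> H i Hi; rewrite !eca_val.
by rewrite (H (i-1)%Z) ?(H i) ?(H (i+1)%Z) //; lia.
Qed.

Lemma ext_iter y y' : (forall i, y i = y' i) -> forall t i, eca_iter 104 t y i = eca_iter 104 t y' i.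
Proof.
move=> H; elim=> [|t IH] i //=.
by rewrite !eca_val !IH.
Qed.

Lemma patch_out u z i : (i < 0 \/ Z.of_nat (size z) <= i)%Z -> patch u z i = periodic u i.
Proof.
move=> Hi; rewrite /patch.
destruct (Z.leb_spec 0 i); destruct (Z.ltb_spec i (Z.of_nat (size z))); simpl; try lia; reflexivity.
Qed.

Lemma cone u z t i : (i < - Z.of_nat t \/ Z.of_nat (size z) + Z.of_nat t <= i)%Z ->
  eca_iter 104 t (patch u z) i = eca_iter 104 t (periodic u) i.
Proof.
elim: t i => [|t IH] i Hi.
  by apply: patch_out; lia.
rewrite !iterS; apply: (@step_agree _ _ (- Z.of_nat t)%Z (Z.of_nat (size z) + Z.of_nat t)%Z IH).
lia.
Qed.

Lemma per1 u t i : eca_iter 104 t (periodic u) (i + Z.of_nat (size u))%Z = eca_iter 104 t (periodic u) i.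
Proof.
elim: t i => [|t IH] i.
  rewrite /= /periodic.
  by rewrite (_ : (i + Z.of_nat (size u) = i + 1 * Z.of_nat (size u))%Z) ?Z_mod_plus_full //; lia.
rewrite !iterS !eca_val.
rewrite (_ : (i + Z.of_nat (size u) - 1 = (i - 1) + Z.of_nat (size u))%Z); last lia.
rewrite (_ : (i + Z.of_nat (size u) + 1 = (i + 1) + Z.of_nat (size u))%Z); last lia.
by rewrite !IH.
Qed.

Lemma perk u t i k : eca_iter 104 t (periodic u) (i + Z.of_nat k * Z.of_nat (size u))%Z = eca_iter 104 t (periodic u) i.
Proof.
elim: k => [|k IH].
  by rewrite /= Z.add_0_r.
rewrite (_ : (i + Z.of_nat k.+1 * Z.of_nat (size u) = (i + Z.of_nat k * Z.of_nat (size u)) + Z.of_nat (size u))%Z); last lia.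
by rewrite per1 IH.
Qed.

Lemma perkN u t i k : eca_iter 104 t (periodic u) (i - Z.of_nat k * Z.of_nat (size u))%Z = eca_iter 104 t (periodic u) i.
Proof.
rewrite -(perk u t (i - Z.of_nat k * Z.of_nat (size u))%Z k).
by rewrite (_ : (i - Z.of_nat k * Z.of_nat (size u) + Z.of_nat k * Z.of_nat (size u) = i)%Z) //; lia.
Qed.

Lemma wallR y y' R : (forall i, (R <= i)%Z -> y i = y' i) -> y' R = false -> y' (R+1)%Z = false ->
  (forall i, (R <= i)%Z -> eca 104 y i = eca 104 y' i) /\ eca 104 y' R = false /\ eca 104 y' (R+1)%Z = false.
Proof.
move=> H h0 h1.
have e0 : y R = false by rewrite H //; lia.
have e1 : y (R+1)%Z = false by rewrite H //; lia.
split; last split.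
- move=> i Hi. rewrite !eca_val.
  case: (Z.eq_dec i R) => [->|ne].
    by rewrite e0 e1 h0 h1 !rr_ff1.
  by rewrite (H (i-1)%Z) ?(H i) ?(H (i+1)%Z) //; lia.
- by rewrite eca_val h0 h1 rr_ff1.
- rewrite eca_val (_ : (R + 1 - 1 = R)%Z); last lia.
  by rewrite h0 h1 rr_ff2.
Qed.

Lemma wallL y y' Q : (forall i, (i <= Q + 1)%Z -> y i = y' i) -> y' Q = false -> y' (Q+1)%Z = false ->
  (forall i, (i <= Q + 1)%Z -> eca 104 y i = eca 104 y' i) /\ eca 104 y' Q = false /\ eca 104 y' (Q+1)%Z = false.
Proof.
move=> H h0 h1.
have e0 : y Q = false by rewrite H //; lia.
have e1 : y (Q+1)%Z = false by rewrite H //; lia.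
split; last split.
- move=> i Hi. rewrite !eca_val.
  case: (Z.eq_dec i (Q+1)%Z) => [->|ne].
    rewrite (_ : (Q + 1 - 1 = Q)%Z); last lia.
    by rewrite e0 e1 h0 h1 !rr_ff2.
  by rewrite (H (i-1)%Z) ?(H i) ?(H (i+1)%Z) //; lia.
- by rewrite eca_val h0 h1 rr_ff1.
- rewrite eca_val (_ : (Q + 1 - 1 = Q)%Z); last lia.
  by rewrite h0 h1 rr_ff2.
Qed.

Lemma caseB u z t0 p : (0 < size u)%N ->
  eca_iter 104 t0 (periodic u) p = false -> eca_iter 104 t0 (periodic u) (p+1)%Z = false ->
  SInv 104 u z.
Proof.
move=> Hu h0 h1.
set n := Z.of_nat (size z). set L := Z.of_nat (size u). set T := Z.of_nat t0.
have HL : (1 <= L)%Z by rewrite /L; lia.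
set kR := Z.to_nat (n + T - p).
set R := (p + Z.of_nat kR * L)%Z.
have HR : (n + T <= R)%Z.
  have : (Z.of_nat kR * L >= Z.of_nat kR)%Z by nia.
  rewrite /R /kR; lia.
set kQ := Z.to_nat (p + T + 2).
set Q := (p - Z.of_nat kQ * L)%Z.
have HQ : (Q <= - T - 2)%Z.
  have : (Z.of_nat kQ * L >= Z.of_nat kQ)%Z by nia.
  rewrite /Q /kQ; lia.
have bR0 : eca_iter 104 t0 (periodic u) R = false by rewrite /R perk.
have bR1 : eca_iter 104 t0 (periodic u) (R+1)%Z = false.
  by rewrite /R (_ : (p + Z.of_nat kR * L + 1 = (p + 1) + Z.of_nat kR * L)%Z) ?perk //; lia.
have bQ0 : eca_iter 104 t0 (periodic u) Q = false by rewrite /Q perkN.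
have bQ1 : eca_iter 104 t0 (periodic u) (Q+1)%Z = false.
  by rewrite /Q (_ : (p - Z.of_nat kQ * L + 1 = (p + 1) - Z.of_nat kQ * L)%Z) ?perkN //; lia.
have InvR : forall m, (forall i, (R <= i)%Z -> eca_iter 104 (m + t0) (patch u z) i = eca_iter 104 (m + t0) (periodic u) i)
   /\ eca_iter 104 (m + t0) (periodic u) R = false /\ eca_iter 104 (m + t0) (periodic u) (R+1)%Z = false.
  elim=> [|m [IH1 [IH2 IH3]]].
    split; last by split.
    move=> i Hi; apply: cone; rewrite -/n; lia.
  have := wallR _ _ _ IH1 IH2 IH3.
  by rewrite addSn !iterS.
have InvL : forall m, (forall i, (i <= Q + 1)%Z -> eca_iter 104 (m + t0) (patch u z) i = eca_iter 104 (m + t0) (periodic u) i)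
   /\ eca_iter 104 (m + t0) (periodic u) Q = false /\ eca_iter 104 (m + t0) (periodic u) (Q+1)%Z = false.
  elim=> [|m [IH1 [IH2 IH3]]].
    split; last by split.
    move=> i Hi; apply: cone; rewrite -/n; lia.
  have := wallL _ _ _ IH1 IH2 IH3.
  by rewrite addSn !iterS.
exists (R - Q)%Z => t; exists Q => i Hdiff.
case: (leqP t0 t) => Ht.
  rewrite -(subnK Ht) in Hdiff.
  have [A _] := InvR (t - t0).
  have [B _] := InvL (t - t0).
  split.
    case: (Z.le_gt_cases i (Q+1)) => Hi; last lia.
    by exfalso; apply: Hdiff; rewrite B.
  case: (Z.le_gt_cases R i) => Hi; last lia.
  by exfalso; apply: Hdiff; rewrite A.
have Ht' : (Z.of_nat t < T)%Z by rewrite /T; lia.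
case: (Z.le_gt_cases (- Z.of_nat t) i) => H1; last first.
  by exfalso; apply: Hdiff; rewrite cone //; lia.
case: (Z.le_gt_cases (n + Z.of_nat t) i) => H2.
  by exfalso; apply: Hdiff; rewrite cone //; lia.
lia.
Qed.

Lemma patch_in u z k : (k < size z)%N -> patch u z (Z.of_nat k) = nth false z k.
Proof.
move=> Hk; rewrite /patch.
destruct (Z.leb_spec 0 (Z.of_nat k)); destruct (Z.ltb_spec (Z.of_nat k) (Z.of_nat (size z))); simpl; try lia.
by rewrite Nat2Z.id.
Qed.

Lemma caseA u z : (forall t p, eca_iter 104 t (periodic u) p || eca_iter 104 t (periodic u) (p+1)%Z) ->
  SInv 104 u z <-> (forall k, (k < size z)%N -> nth false z k = periodic u (Z.of_nat k)).
Proof.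
move=> Hb; split; last first.
  move=> H.
  have E : forall i, patch u z i = periodic u i.
    move=> i; rewrite /patch.
    destruct (Z.leb_spec 0 i); destruct (Z.ltb_spec i (Z.of_nat (size z))); simpl; try reflexivity.
    rewrite H; last lia.
    by rewrite Z2Nat.id.
  exists 0%Z => t; exists 0%Z => i Hd; exfalso; apply: Hd.
  by rewrite (ext_iter _ _ E).
move=> [w Hw] k Hk.
case E: (nth false z k == periodic u (Z.of_nat k)); first by move/eqP: E.
exfalso.
set b := periodic u. set c := patch u z.
have [j [p [Hj [c0 c1]]]] : exists j p, (j <= 3)%N /\ eca_iter 104 j c p = false /\ eca_iter 104 j c (p+1)%Z = false.
  apply: NNPP => Hno.
  have Nc : N3 c.
    move=> j p Hj.
    case E1: (eca_iter 104 j c p) => //; case E2: (eca_iter 104 j c (p+1)%Z) => //.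
    by exfalso; apply: Hno; exists j, p.
  have Nb : N3 b by move=> j p _; apply: Hb.
  have Hall : forall m : nat, forall i, (Z.of_nat (size z) - Z.of_nat m <= i)%Z -> c i = b i.
    elim=> [|m IH] i Hi.
      by rewrite /c patch_out //; lia.
    case: (Z.le_gt_cases (Z.of_nat (size z) - Z.of_nat m) i) => Hi'; first exact: IH.
    apply: det => // k' Hk'; apply: IH; lia.
  move/negP: E; apply; apply/eqP.
  rewrite -(patch_in u) // -/c (Hall (size z)) //; lia.
have Grow : forall m : nat, exists q1 q2, (p + Z.of_nat m <= q1)%Z /\ (q2 <= p - Z.of_nat m)%Z /\
   eca_iter 104 (3 * m + j) c q1 = false /\ eca_iter 104 (3 * m + j) c (q1+1)%Z = false /\
   eca_iter 104 (3 * m + j) c q2 = false /\ eca_iter 104 (3 * m + j) c (q2+1)%Z = false.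
  elim=> [|m [q1 [q2 [H1 [H2 [H3 [H4 [H5 H6]]]]]]]].
    by exists p, p; rewrite muln0 add0n; split; [lia|split; [lia|]].
  have [r1 [R1 [R2 R3]]] := growR _ _ H3 H4.
  have [r2 [S1 [S2 S3]]] := growL _ _ H5 H6.
  exists r1, r2.
  have e2 : (3 * m.+1 + j = 3 + (3 * m + j))%N by rewrite mulnS addnA.
  have EE : eca_iter 104 (3 * m.+1 + j) c = eca_iter 104 3 (eca_iter 104 (3 * m + j) c) :=
    eq_trans (f_equal (fun t => eca_iter 104 t c) e2) (iter_add 3 (3*m+j) c).
  rewrite EE.
  split; first (clear -H1 R1; lia). split; first (clear -H2 S1; lia).
  split; first exact R2. split; first exact R3. split; first exact S2. exact S3.
have [m Hm0] : exists m, m = (Z.to_nat w).+1 by eexists.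
have Hm : (w < Z.of_nat m)%Z by rewrite Hm0; clear; lia.
have [q1 [q2 [H1 [H2 [H3 [H4 [H5 H6]]]]]]] := Grow m.
have [a Ha] := Hw (3 * m + j).
have D1 : exists d, (q1 <= d <= q1 + 1)%Z /\ (a <= d < a + w)%Z.
  case E1: (eca_iter 104 (3 * m + j) b q1).
    by exists q1; split; [clear -q1; lia|]; apply: Ha; rewrite E1 -/c H3.
  have := Hb (3 * m + j) q1; rewrite -/b E1 orFb => E2.
  by exists (q1+1)%Z; split; [clear -q1; lia|]; apply: Ha; rewrite E2 -/c H4.
have D2 : exists d, (q2 <= d <= q2 + 1)%Z /\ (a <= d < a + w)%Z.
  case E1: (eca_iter 104 (3 * m + j) b q2).
    by exists q2; split; [clear -q2; lia|]; apply: Ha; rewrite E1 -/c H5.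
  have := Hb (3 * m + j) q2; rewrite -/b E1 orFb => E2.
  by exists (q2+1)%Z; split; [clear -q2; lia|]; apply: Ha; rewrite E2 -/c H6.
case: D1 => d1 [Da Db]; case: D2 => d2 [Dc Dd].
clear -H1 H2 Hm Da Db Dc Dd; lia.
Qed.

Lemma cat_char (u : seq bool) (x y : seq bool) :
  (all (fun k => nth false x k == periodic u (Z.of_nat k)) (iota 0 (size x)) &&
   all (fun k => nth false y k == periodic u (Z.of_nat (size x + k))) (iota 0 (size y)))
  <-> (forall k, (k < size (x ++ y))%N -> nth false (x ++ y) k = periodic u (Z.of_nat k)).
Proof.
split.
  move=> /andP [/allP Ha /allP Hb] k; rewrite size_cat nth_cat => Hk.
  case: ifP => Hx.
    by apply/eqP; apply: Ha; rewrite mem_iota.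
  have Hk' : (k - size x < size y)%N by rewrite ltn_subLR // leqNgt Hx.
  have := Hb (k - size x); rewrite mem_iota add0n Hk' => /(_ isT) /eqP ->.
  by rewrite subnKC // leqNgt Hx.
move=> H; apply/andP; split; apply/allP => k; rewrite mem_iota add0n => /andP [_ Hk]; apply/eqP.
  by rewrite -H ?nth_cat ?Hk // size_cat; apply: leq_trans Hk (leq_addr _ _).
rewrite -H; last by rewrite size_cat ltn_add2l.
by rewrite nth_cat ltnNge leq_addr /= addKn.
Qed.

Theorem mainTheorem16 :
  forall u : seq bool, u <> [::] ->
    exists c : nat, forall n : nat, SInv_cc_le 104 u n c.
Proof.
move=> u Hu.
have Hs : (0 < size u)%N by case: u Hu.
case: (classic (exists t p, eca_iter 104 t (periodic u) p = false /\ eca_iter 104 t (periodic u) (p+1)%Z = false)).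
  move=> [t0 [p [h0 h1]]].
  exists 0%N => n i Hi.
  exists (PLeaf (i.-tuple bool) ((n - i).-tuple bool) true); split => // x y.
  split => // _; exact: (caseB _ _ t0 p Hs h0 h1).
move=> Hno.
have Hb : forall t p, eca_iter 104 t (periodic u) p || eca_iter 104 t (periodic u) (p+1)%Z.
  move=> t p; case E1: (eca_iter 104 t (periodic u) p) => //; case E2: (eca_iter 104 t (periodic u) (p+1)%Z) => //.
  by exfalso; apply: Hno; exists t, p.
exists 2%N => n i Hi.
pose fa := fun x : i.-tuple bool => all (fun k => nth false x k == periodic u (Z.of_nat k)) (iota 0 i).
pose fb := fun y : (n - i).-tuple bool => all (fun k => nth false y k == periodic u (Z.of_nat (i + k))) (iota 0 (n - i)).
exists (PAlice fa (PBob fb (PLeaf _ _ true) (PLeaf _ _ false)) (PLeaf _ _ false)); split => // x y.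
rewrite (caseA u (tval x ++ tval y) Hb) -cat_char.
rewrite /= /fa /fb !size_tuple.
by case: (all _ _); case: (all _ _).
Qed.
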